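(* Let $k\ge 2$ and let $\mathbf{d}_1,\dots,\mathbf{d}_k\in\mathbb{R}^3$ be unit vectors. Then there exists a unit vector $\mathbf{d}\in\mathbb{R}^3$ such that $\frac{1}{10k}\le|\mathbf{d}^\top\mathbf{d}_i|\le 1-\frac{1}{10k}$ for all $1\le i\le k$. *)

(* Defs.v *)
From HB Require Import structures.
From mathcomp Require Import all_boot all_order all_algebra.
From mathcomp Require Import reals.
Set Implicit Arguments. Unset Strict Implicit. Unset Printing Implicit Defensive.
Import Order.TTheory GRing.Theory Num.Theory.
Local Open Scope ring_scope.

Definition dot3 (R : realType) (u v : 'rV[R]_3) : R := \sum_(j < 3) u 0 j * v 0 j.

Definition unit3 (R : realType) (u : 'rV[R]_3) : Prop := dot3 u u = 1.

(* Main.v *)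
Require Import Defs.
From HB Require Import structures.
From mathcomp Require Import all_boot all_order all_algebra.
From mathcomp Require Import reals.
From mathcomp Require Import ring lra zify.
Import Order.TTheory GRing.Theory Num.Theory.
Local Open Scope ring_scope.

Lemma sorted_last_ge (x : nat) (s : seq nat) :
  sorted ltn (x :: s) -> (x + size s <= last x s)%N.
Proof.
elim: s x => [|y s IH] x /=; first by rewrite addn0.
case/andP => xy Hs. have := IH y Hs. rewrite addnS. move=> H.
by apply: leq_trans H; rewrite ltn_add2r.
Qed.

Section S.
Variable R : realType.

Lemma sum_count (s : seq nat) (P : pred nat) :
  \sum_(z <- s) ((P z)%:R : R) = (count P s)%:R.
Proof.
elim: s => [|x s IH]; first by rewrite big_nil.
by rewrite big_cons IH /= natrD.
Qed.

Lemma count1D (M : nat) (P : pred nat) (L : R) : 0 <= L ->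
  (forall z1 z2, (z1 < M)%N -> (z2 < M)%N -> P z1 -> P z2 ->
     (z2%:R - z1%:R : R) <= L) ->
  \sum_(0 <= z < M) ((P z)%:R : R) <= L + 1.
Proof.
move=> L0 H. rewrite sum_count /index_iota subn0 -size_filter.
have so : sorted ltn [seq z <- iota 0 M | P z].
  by apply: sorted_filter; [exact: ltn_trans| exact: iota_ltn_sorted].
have mem : forall z, z \in [seq z <- iota 0 M | P z] -> (z < M)%N && P z.
  by move=> z; rewrite mem_filter mem_iota add0n andbC.
move: so mem; case: [seq z <- iota 0 M | P z] => [|x s] so mem.
  move=> /=; lra.
have hx := mem x (mem_head _ _).
have hl := mem (last x s) (mem_last _ _).
case/andP: hx => hx1 hx2; case/andP: hl => hl1 hl2.
have := H _ _ hx1 hl1 hx2 hl2.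
have := @sorted_last_ge x s so.
move=> hle hd.
rewrite /= -addn1 natrD lerD2r.
apply: le_trans hd.
rewrite lerBrDr -natrD ler_nat addnC. done.
Qed.

End S.

Definition badDS {R : realType} (e D S : R) : bool :=
  (D^+2 <= e^+2 * S) || ((1 - e)^+2 * S < D^+2).

Section Cap.
Variable R : realType.

Lemma orb_le (b1 b2 : bool) :
  (nat_of_bool (b1 || b2))%:R <= (nat_of_bool b1)%:R + (nat_of_bool b2)%:R :> R.
Proof. by case: b1; case: b2; rewrite /= ?addr0 ?add0r //; lra. Qed.

Lemma sumsq (b : R) n : 6 * \sum_(0 <= z < n) (z%:R - b)^+2 =
  n%:R*(n%:R-1)*(2*n%:R-1) - 6*b*n%:R*(n%:R-1) + 6*n%:R*b^+2.
Proof.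
elim: n => [|n IH]; first by rewrite big_geq // mulr0; ring.
rewrite big_nat_recr //= mulrDr IH -natr1. ring.
Qed.

Lemma sq_lt_abs (x b : R) : 0 <= b -> x^+2 < b^+2 -> `|x| < b.
Proof. move=> b0; rewrite -(real_normK (num_real x)) => h. have := normr_ge0 x. nra. Qed.
Lemma sq_le_abs (x b : R) : 0 <= b -> x^+2 <= b^+2 -> `|x| <= b.
Proof. move=> b0; rewrite -(real_normK (num_real x)) => h. have := normr_ge0 x. nra. Qed.

Variables (N : nat) (a p q e : R).
Hypotheses (hu : a^+2+p^+2+q^+2 = 1) (hp : p^+2 <= a^+2) (hq : q^+2 <= a^+2)
  (he0 : 0 < e) (he : e <= 1/20).
Let v (z : nat) : R := z%:R - N%:R.
Let mu := (1 - e)^+2.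
Let eta := a^+2+p^+2+q^+2 - mu.
Let al := a^+2 - eta.
Let A := mu - q^+2.
Let H1 := Num.sqrt (eta * A / al^+2).
Let H2 := Num.sqrt (mu * eta / (al * A)).
Let G (c t : R) := c^+2 * eta * A / al - al * (t - c * a * p / al)^+2.

Lemma ha3 : 1/3 <= a^+2. Proof. have := sqr_ge0 p; have := sqr_ge0 q. move: hu hp hq. lra. Qed.
Lemma eta_eq : eta = 2 * e - e^+2. Proof. rewrite /eta hu /mu; ring. Qed.
Lemma eta_pos : 0 < eta. Proof. rewrite eta_eq. move: he0 he; nra. Qed.
Lemma eta_le : eta <= 1/10. Proof. rewrite eta_eq. move: he0 he; nra. Qed.
Lemma mu_ge : 361/400 <= mu. Proof. rewrite /mu. move: he0 he; nra. Qed.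
Lemma mu_le : mu <= 1. Proof. rewrite /mu. move: he0 he; nra. Qed.
Lemma al_ge : 7/30 <= al. Proof. have := eta_le; have := ha3. rewrite /al. lra. Qed.
Lemma A_ge : 1/5 <= A. Proof. have := mu_ge; have := ha3. have := sqr_ge0 p. rewrite /A. move: hu; lra. Qed.
Lemma A_le : A <= 1. Proof. have := mu_le. have := sqr_ge0 q. rewrite /A. lra. Qed.

Lemma capid (c t y : R) :
  (a*c+p*t+q*y)^+2 - mu * (c^+2+t^+2+y^+2) = - A * (y - q * (a*c+p*t) / A)^+2 + mu * G c t / A.
Proof.
have hA : A != 0 by have := A_ge; lra.
have hal : al != 0 by have := al_ge; lra.
rewrite /G /A /al /eta. field. by move: hA hal; rewrite /A /al /eta => -> ->.
Qed.

Lemma Gid (c t : R) : G c t <= c^+2 * eta * A / al.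
Proof.
rewrite /G lerBlDr lerDl. apply: mulr_ge0; last exact: sqr_ge0.
have := al_ge; lra.
Qed.

Lemma H2_ge0 : 0 <= H2. Proof. exact: sqrtr_ge0. Qed.
Lemma H1_ge0 : 0 <= H1. Proof. exact: sqrtr_ge0. Qed.

Lemma cap_inner (c t : R) (M : nat) :
  \sum_(0 <= y < M) (nat_of_bool (mu * (c^+2+t^+2+(v y)^+2) < (a*c+p*t+q*v y)^+2))%:R
  <= (nat_of_bool (0 < G c t))%:R * (2 * `|c| * H2 + 1).
Proof.
have hA := A_ge. have hal := al_ge. have he0' := he0. have he' := he. have heta := eta_pos. have hmu := mu_ge.
case: (ltrP 0 (G c t)) => hG.
- rewrite mul1r. set y0 := q * (a*c+p*t) / A.
  have key : forall y, mu * (c^+2+t^+2+(v y)^+2) < (a*c+p*t+q*v y)^+2 ->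
      `|v y - y0| < `|c| * H2.
    move=> y hy. apply: sq_lt_abs; first by rewrite mulr_ge0 ?normr_ge0 ?sqrtr_ge0.
    rewrite exprMn sqr_sqrtr; last first.
      apply: divr_ge0; first by apply: mulr_ge0; lra.
      by apply: mulr_ge0; lra.
    rewrite real_normK ?num_real //.
    have h1 : 0 < - A * (v y - y0)^+2 + mu * G c t / A by rewrite -capid subr_gt0.
    have h2 := Gid c t.
    set Y := (v y - y0)^+2 in h1 *.
    have h3 : A * Y < mu * G c t / A by lra.
    have h4 : mu * G c t / A <= mu * (c^+2 * eta * A / al) / A.
      rewrite ler_pM2r ?invr_gt0 ?ler_pM2l //; lra.
    have h5 : mu * (c^+2 * eta * A / al) / A = A * (c^+2 * (mu * eta / (al * A))).
      field. apply/andP; split; lra.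
    rewrite -(ltr_pM2l (x:=A)); last lra.
    lra.
  apply: count1D; first by rewrite !mulr_ge0 ?normr_ge0 ?H2_ge0.
  move=> y1 y2 _ _ b1 b2. have k1 := key _ b1; have k2 := key _ b2.
  have e2 := ler_norm (v y2 - y0); have e1 := ler_norm (- (v y1 - y0)).
  rewrite normrN in e1. move: k1 k2 e1 e2; rewrite /v. lra.
- rewrite /= mul0r big1 // => y _.
  rewrite ltNge -subr_le0 capid.
  have : mu * G c t / A <= 0.
    rewrite -mulrA. apply: mulr_ge0_le0; first lra.
    apply: mulr_le0_ge0 => //. rewrite invr_ge0; lra.
  have : 0 <= A * (v y - q * (a * c + p * t) / A) ^+ 2.
    apply: mulr_ge0; [lra | exact: sqr_ge0].
  by move=> h1 h2; rewrite (_ : _ + _ <= 0) //; lra.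
Qed.

Lemma cap_slice (c : R) (M : nat) :
  \sum_(0 <= t < M) \sum_(0 <= y < M)
    (nat_of_bool (mu * (c^+2+(v t)^+2+(v y)^+2) < (a*c+p*v t+q*v y)^+2))%:R
  <= (2 * `|c| * H1 + 1) * (2 * `|c| * H2 + 1).
Proof.
have hA := A_ge. have hal := al_ge. have he0' := he0. have he' := he. have heta := eta_pos. have hmu := mu_ge.
apply: le_trans (_ : \sum_(0 <= t < M) (nat_of_bool (0 < G c (v t)))%:R * (2 * `|c| * H2 + 1) <= _).
  by apply: ler_sum => t _; exact: cap_inner.
rewrite -mulr_suml. apply: ler_wpM2r.
  by apply: addr_ge0; [rewrite !mulr_ge0 ?normr_ge0 ?H2_ge0 | ].
set t0 := c * a * p / al.
have key : forall t, 0 < G c (v t) -> `|v t - t0| < `|c| * H1.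
  move=> t ht. apply: sq_lt_abs; first by rewrite mulr_ge0 ?normr_ge0 ?sqrtr_ge0.
  rewrite exprMn sqr_sqrtr; last first.
    apply: divr_ge0; first by apply: mulr_ge0; lra.
    exact: sqr_ge0.
  rewrite real_normK ?num_real //.
  move: ht; rewrite /G -/t0 subr_gt0 => ht.
  have h5 : c ^+ 2 * eta * A / al = al * (c^+2 * (eta * A / al^+2)).
    field. lra.
  rewrite -(ltr_pM2l (x:=al)); last lra.
  lra.
apply: count1D; first by rewrite !mulr_ge0 ?normr_ge0 ?H1_ge0.
move=> y1 y2 _ _ b1 b2. have k1 := key _ b1; have k2 := key _ b2.
have e2 := ler_norm (v y2 - t0); have e1 := ler_norm (- (v y1 - t0)).
rewrite normrN in e1. move: k1 k2 e1 e2; rewrite /v. lra.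
Qed.

Lemma sqrt_le (X b : R) : 0 <= b -> X <= b^+2 -> Num.sqrt X <= b.
Proof.
move=> b0 h. have : Num.sqrt X <= Num.sqrt (b^+2) by rewrite ler_sqrt // sqr_ge0.
by rewrite sqrtr_sqr ger0_norm.
Qed.

Lemma H12 : H1 * H2 <= 18 * e.
Proof.
have hA := A_ge. have hal := al_ge. have he0' := he0. have he' := he. have heta := eta_pos. have hmu := mu_ge.
have hmu1 := mu_le. have hA1 := A_le.
rewrite /H1 /H2 -sqrtrM; last by apply: divr_ge0; [apply: mulr_ge0; lra| exact: sqr_ge0].
apply: sqrt_le; first lra.
have -> : eta * A / al ^+ 2 * (mu * eta / (al * A)) = eta^+2 * mu / al^+3.
  field. apply/andP; split; lra.
rewrite ler_pdivrMr; last by apply: exprn_gt0; lra.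
have i1 : eta^+2 * mu <= 4 * e^+2.
  have : eta <= 2 * e by rewrite eta_eq; have := sqr_ge0 e; lra.
  move=> h. have : eta^+2 <= 4 * e^+2 by nra. nra.
have i2 : 1/81 <= al^+3.
  have h1 : 49/900 <= al^+2 by nra.
  rewrite exprS. have : 7/30 * (49/900) <= al * al^+2 by nra. lra.
have := sqr_ge0 e. nra.
Qed.

Lemma H1_le : H1 <= 2.
Proof.
have hA := A_ge. have hal := al_ge. have he0' := he0. have he' := he. have heta := eta_pos. have hetal := eta_le.
have hA1 := A_le.
apply: sqrt_le; first lra.
rewrite ler_pdivrMr; last by apply: exprn_gt0; lra.
have : 49/900 <= al^+2 by nra. nra.
Qed.

Lemma H2_le : H2 <= 2.
Proof.
have hA := A_ge. have hal := al_ge. have he0' := he0. have he' := he. have heta := eta_pos. have hetal := eta_le.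
have hmu1 := mu_le. have hmu := mu_ge.
apply: sqrt_le; first lra.
rewrite ler_pdivrMr; last by apply: mulr_gt0; lra.
have : 7/150 <= al * A by nra. nra.
Qed.

Lemma sq_from_abs (x n : R) : `|x| <= n -> x^+2 <= n^+2.
Proof. rewrite -(real_normK (num_real x)) => h. have := normr_ge0 x. nra. Qed.

Lemma v_abs (M z : nat) : M = (2*N).+1 -> (z < M)%N -> `|v z| <= N%:R.
Proof.
move=> -> hz. rewrite /v ler_norml. apply/andP; split.
  have := ler0n R z. lra.
rewrite lerBlDr -natrD ler_nat. move: hz. rewrite ltnS. lia.
Qed.

Lemma band_line (t y : R) (M : nat) : M = (2*N).+1 -> `|t| <= N%:R -> `|y| <= N%:R ->
  \sum_(0 <= c < M) (nat_of_bool ((a*v c + p*t + q*y)^+2 <= e^+2 * ((v c)^+2 + t^+2 + y^+2)))%:R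
  <= 6 * e * N%:R + 1.
Proof.
move=> hM ht hy. have h3 := ha3. have he0' := he0.
have hN := ler0n R N.
apply: count1D; first by rewrite !mulr_ge0 //; lra.
move=> c1 c2 hc1 hc2 b1 b2.
have a1 := sq_from_abs _ _ (v_abs _ _ hM hc1). have a2 := sq_from_abs _ _ (v_abs _ _ hM hc2).
have t2 := sq_from_abs _ _ ht. have y2 := sq_from_abs _ _ hy.
have he2 := sqr_ge0 e.
set D1 := a * v c1 + p * t + q * y in b1.
set D2 := a * v c2 + p * t + q * y in b2.
have s1 : D1^+2 <= 3 * e^+2 * N%:R^+2.
  apply: le_trans b1 _. nra.
have s2 : D2^+2 <= 3 * e^+2 * N%:R^+2.
  apply: le_trans b2 _. nra.
have d : D2 - D1 = a * (v c2 - v c1) by rewrite /D1 /D2; ring.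
have s3 : (D2 - D1)^+2 <= 12 * e^+2 * N%:R^+2.
  have := sqr_ge0 (D2 + D1). nra.
rewrite d exprMn in s3.
have s4 : (v c2 - v c1)^+2 <= (6 * e * N%:R)^+2.
  have := sqr_ge0 (v c2 - v c1). nra.
have h0 : 0 <= 6 * e * N%:R by rewrite !mulr_ge0 //; lra.
have := sq_le_abs _ _ h0 s4. rewrite (_ : v c2 - v c1 = c2%:R - c1%:R); last by rewrite /v; ring.
move=> h. have := ler_norm (c2%:R - c1%:R : R). lra.
Qed.

Lemma triple (M : nat) (f : nat -> nat -> nat -> bool) : M = (2*N).+1 ->
 (forall c t y, f c t y = badDS e (a*v c + p*v t + q*v y) ((v c)^+2+(v t)^+2+(v y)^+2)) ->
 \sum_(0<=c<M) \sum_(0<=t<M) \sum_(0<=y<M) (nat_of_bool (f c t y))%:R <=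
 M%:R^+2 * (6*e*N%:R+1) + 24 * e * N%:R*(N%:R+1)*(2*N%:R+1) + 8*N%:R*M%:R + M%:R.
Proof.
move=> hM hf.
apply: le_trans (_ : \sum_(0<=c<M) \sum_(0<=t<M) \sum_(0<=y<M)
   (nat_of_bool ((a*v c + p*v t + q*v y)^+2 <= e^+2 * ((v c)^+2 + (v t)^+2 + (v y)^+2)))%:R
 + \sum_(0<=c<M) \sum_(0<=t<M) \sum_(0<=y<M)
   (nat_of_bool (mu * ((v c)^+2+(v t)^+2+(v y)^+2) < (a*v c+p*v t+q*v y)^+2))%:R <= _).
  rewrite -big_split; apply: ler_sum => c _; rewrite -big_split; apply: ler_sum => t _.
  rewrite -big_split; apply: ler_sum => y _; rewrite hf; exact: orb_le.
have hN := ler0n R N.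
rewrite -!addrA. apply: lerD.
  rewrite exchange_big /=. under eq_bigr => t _ do rewrite exchange_big /=.
  apply: le_trans (_ : \sum_(0<=t<M) \sum_(0<=y<M) (6*e*N%:R+1) <= _).
    apply: ler_sum_nat => t /andP [_ ht].
    apply: ler_sum_nat => y /andP [_ hy].
    exact: (band_line (v t) (v y) M hM (v_abs _ _ hM ht) (v_abs _ _ hM hy)).
  by rewrite !sumr_const_nat subn0 -mulrnA expr2 -natrM [(_ * M)%:R * _]mulr_natl.
apply: le_trans (_ : \sum_(0<=c<M) (72 * e * (v c)^+2 + 8 * N%:R + 1) <= _).
  apply: ler_sum_nat => c /andP [_ hc].
  apply: le_trans; first exact: cap_slice.
  have h12 := H12. have h1 := H1_le. have h2 := H2_le. have h10 := H1_ge0.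
  have h20 := H2_ge0. have hx := v_abs _ _ hM hc. have hx0 := normr_ge0 (v c).
  rewrite -(real_normK (num_real (v c))).
  set x := `|v c| in hx hx0 *.
  have k1 : x^+2 * (H1 * H2) <= x^+2 * (18 * e) by apply: ler_wpM2l => //; exact: sqr_ge0.
  have k2 : x * (H1 + H2) <= N%:R * 4 by apply: ler_pM => //; [lra | lra].
  nra.
rewrite big_split big_split /=.
have e1 : \sum_(0<=i<M) 72*e*v i^+2 = 12*e*(6*\sum_(0<=z<M) (z%:R - N%:R)^+2).
  by rewrite -mulr_sumr /v /=; ring.
have e2 : \sum_(0<=i<M) 8*N%:R = 8*N%:R*M%:R :> R by rewrite sumr_const_nat subn0 (mulr_natr (8*N%:R) M).
have e3 : \sum_(0<=i<M) (1:R) = M%:R by rewrite sumr_const_nat subn0.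
have hM2 : ((2*N).+1)%:R = 2 * N%:R + 1 :> R by rewrite -natr1 natrM.
rewrite e1 e2 e3 sumsq hM hM2.
set n := N%:R.
have -> : 12 * e * ((2 * n + 1) * (2 * n + 1 - 1) * (2 * (2 * n + 1) - 1) -
     6 * n * (2 * n + 1) * (2 * n + 1 - 1) + 6 * (2 * n + 1) * n ^+ 2)
  = 24 * e * n * (n + 1) * (2 * n + 1) by ring.
lra.
Qed.
End Cap.


Definition i0 : 'I_3 := @Ordinal 3 0 isT.
Definition i1 : 'I_3 := @Ordinal 3 1 isT.
Definition i2 : 'I_3 := @Ordinal 3 2 isT.

Lemma dot3E (R : realType) (x y : 'rV[R]_3) :
  dot3 x y = x 0 i0 * y 0 i0 + x 0 i1 * y 0 i1 + x 0 i2 * y 0 i2.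
Proof.
rewrite /dot3 !big_ord_recl big_ord0 addr0 addrA.
have -> : (ord0 : 'I_3) = i0 by apply: val_inj.
have -> : (lift i0 ord0 : 'I_3) = i1 by apply: val_inj.
by have -> : (lift i0 (lift ord0 ord0) : 'I_3) = i2 by apply: val_inj.
Qed.

Lemma one_le_sum (R : realType) (k : nat) (b : 'I_k -> bool) i : b i ->
  1 <= \sum_(j < k) ((nat_of_bool (b j))%:R : R).
Proof.
move=> hb. rewrite (bigD1 i) //= hb lerDl. by apply: sumr_ge0 => j _; exact: ler0n.
Qed.

Theorem lemma7p2 (R : realType) (k : nat) (hk : (2 <= k)%N)
  (ds : 'I_k -> 'rV[R]_3) (hds : forall i, unit3 (ds i)) :
  exists d : 'rV[R]_3, unit3 d /\
    forall i : 'I_k,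
      1 / (10 * k%:R) <= `|dot3 d (ds i)| <= 1 - 1 / (10 * k%:R).
Proof.
set k' : R := k%:R.
have hk' : 2 <= k' by rewrite /k' (ler_nat R 2 k).
set e := 1 / (10 * k').
have he0 : 0 < e by rewrite /e divr_gt0 //; lra.
have he : e <= 1/20.
  rewrite /e ler_pdivrMr; last lra.
  rewrite mulrC mulrA ler_pdivlMr; lra.
set N := (30 * k)%N.
set M := (2 * N).+1.
have hM : M = (2 * N).+1 by [].
pose v (z : nat) : R := z%:R - N%:R.
pose u (i : 'I_k) (j : 'I_3) : R := ds i 0 j.
have hu : forall i, u i i0 ^+ 2 + u i i1 ^+ 2 + u i i2 ^+ 2 = 1.
  by move=> i; have := hds i; rewrite /unit3 dot3E /u -!expr2.
pose bad (i : 'I_k) (c t y : nat) : bool :=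
  badDS e (u i i0 * v c + u i i1 * v t + u i i2 * v y) ((v c)^+2 + (v t)^+2 + (v y)^+2).
pose B : R := M%:R^+2 * (6*e*N%:R+1) + 24 * e * N%:R*(N%:R+1)*(2*N%:R+1)
   + 8*N%:R*M%:R + M%:R.
have hB : forall i, \sum_(0<=c<M) \sum_(0<=t<M) \sum_(0<=y<M) (nat_of_bool (bad i c t y))%:R <= B.
  move=> i. have hui := hu i.
  set u0 := u i i0 in hui *; set u1 := u i i1 in hui *; set u2 := u i i2 in hui *.
  have s0 := sqr_ge0 u0; have s1 := sqr_ge0 u1; have s2 := sqr_ge0 u2.
  case: (lerP (u1^+2) (u0^+2)) => h10.
    case: (lerP (u2^+2) (u0^+2)) => h20.
      by apply: (@triple R N u0 u1 u2 e _ _ _ he0 he M (bad i)) => //; lra.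
    under eq_bigr => c _ do rewrite exchange_big /=.
    rewrite exchange_big /=.
    apply: (@triple R N u2 u0 u1 e _ _ _ he0 he M (fun y c t => bad i c t y)) => //; try lra.
    by move=> y c t; rewrite /bad; congr badDS; rewrite /u0 /u1 /u2 /v; ring.
  case: (lerP (u2^+2) (u1^+2)) => h21.
    rewrite exchange_big /=.
    apply: (@triple R N u1 u0 u2 e _ _ _ he0 he M (fun t c y => bad i c t y)) => //; try lra.
    by move=> t c y; rewrite /bad; congr badDS; rewrite /u0 /u1 /u2 /v; ring.
  under eq_bigr => c _ do rewrite exchange_big /=.
  rewrite exchange_big /=.
  apply: (@triple R N u2 u0 u1 e _ _ _ he0 he M (fun y c t => bad i c t y)) => //; try lra.
  by move=> y c t; rewrite /bad; congr badDS; rewrite /u0 /u1 /u2 /v; ring.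
have hsum : \sum_(i<k) \sum_(0<=c<M) \sum_(0<=t<M) \sum_(0<=y<M)
    (nat_of_bool (bad i c t y))%:R <= k' * B.
  apply: le_trans (_ : \sum_(i<k) B <= _); first by apply: ler_sum => i _; exact: hB.
  by rewrite sumr_const card_ord /k' mulr_natl.
have hlt : k' * B < M%:R^+3.
  rewrite /B. set n := N%:R.
  have hn : n = 30 * k' by rewrite /n /N natrM.
  have hMr : M%:R = 2 * n + 1 :> R by rewrite /M -natr1 natrM.
  rewrite hMr.
  have ek : k' * e = 1/10 by rewrite /e; field; lra.
  have -> : k' * ((2 * n + 1) ^+ 2 * (6 * e * n + 1) + 24 * e * n * (n + 1) * (2 * n + 1) +
       8 * n * (2 * n + 1) + (2 * n + 1)) = (2*n+1)^+2*(6*(k'*e)*n + k') +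
       24*(k'*e)*n*(n+1)*(2*n+1) + k'*(8*n*(2*n+1) + (2*n+1)) by ring.
  rewrite ek hn -subr_gt0.
  have -> : (2 * (30 * k') + 1) ^+ 3 -
    ((2 * (30 * k') + 1) ^+ 2 * (6 * (1 / 10) * (30 * k') + k') +
     24 * (1 / 10) * (30 * k') * (30 * k' + 1) * (2 * (30 * k') + 1) +
     k' * (8 * (30 * k') * (2 * (30 * k') + 1) + (2 * (30 * k') + 1)))
    = (60 * k' + 1) * (60 * k'^+2 + 28 * k' + 1) by field.
  apply: mulr_gt0; first lra. have := sqr_ge0 k'. lra.
case: (boolP (has (fun c => has (fun t => has (fun y =>
   all (fun i => ~~ bad i c t y) (enum 'I_k)) (iota 0 M)) (iota 0 M)) (iota 0 M))) => hh;
   last first.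
  exfalso.
  have hx : \sum_(0<=c<M) \sum_(0<=t<M) \sum_(0<=y<M) \sum_(i<k)
      (nat_of_bool (bad i c t y))%:R <= k' * B.
    apply: le_trans hsum. rewrite [X in _ <= X]exchange_big /=.
    apply: ler_sum_nat => c _. rewrite [X in _ <= X]exchange_big /=.
    apply: ler_sum_nat => t _. by rewrite [X in _ <= X]exchange_big /=.
  have cube : \sum_(0<=c<M) \sum_(0<=t<M) \sum_(0<=y<M) (1:R) = M%:R^+3.
    rewrite !sumr_const_nat subn0 -!mulrnA -natrX.
    by congr (_ *+ _); rewrite !expnS expn0 muln1 mulnA.
  have hge : (M%:R : R)^+3 <= \sum_(0<=c<M) \sum_(0<=t<M) \sum_(0<=y<M) \sum_(i<k)
      (nat_of_bool (bad i c t y))%:R.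
    rewrite -cube.
    apply: ler_sum_nat => c hc. apply: ler_sum_nat => t ht.
    apply: ler_sum_nat => y hy.
    have hc' : c \in iota 0 M by rewrite mem_iota.
    have ht' : t \in iota 0 M by rewrite mem_iota.
    have hy' : y \in iota 0 M by rewrite mem_iota.
    move/hasPn: hh => /(_ c hc') /hasPn /(_ t ht') /hasPn /(_ y hy') /allPn [i _].
    rewrite negbK => hb. exact: (@one_le_sum R k (fun j => bad j c t y) i hb).
  have := le_trans hge hx. rewrite leNgt hlt. done.
move: hh => /hasP [c hc /hasP [t ht /hasP [y hy /allP hall]]].
set x0 := v c; set x1 := v t; set x2 := v y.
set S := x0^+2 + x1^+2 + x2^+2.
have good : forall i, e^+2 * S < (ds i 0 i0 * x0 + ds i 0 i1 * x1 + ds i 0 i2 * x2)^+2 /\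
    (ds i 0 i0 * x0 + ds i 0 i1 * x1 + ds i 0 i2 * x2)^+2 <= (1-e)^+2 * S.
  move=> i; have := hall i (mem_enum _ i).
  by rewrite /bad /badDS negb_or -ltNge -leNgt => /andP[h1 h2].
have i00 : 'I_k := Ordinal (leq_trans (isT : (0 < 2)%N) hk).
have hS : 0 < S.
  have [h1 h2] := good i00. have : 0 <= S by rewrite /S; have := sqr_ge0 x0;
    have := sqr_ge0 x1; have := sqr_ge0 x2; lra.
  move=> S0. have := sqr_ge0 e. have : 0 < (1 - e)^+2 by apply: exprn_gt0; lra.
  nra.
set s := Num.sqrt S.
have hs : 0 < s by rewrite sqrtr_gt0.
have hs2 : s^+2 = S by rewrite sqr_sqrtr //; lra.
exists (\row_(j < 3) ([:: x0; x1; x2]`_j / s)).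
split.
  rewrite /unit3 dot3E !mxE /=.
  rewrite (_ : x0 / s * (x0 / s) + x1 / s * (x1 / s) + x2 / s * (x2 / s) = S / s^+2).
    by rewrite hs2 divff //; lra.
  by rewrite /S; field; lra.
move=> i. rewrite dot3E !mxE /=. have [h1 h2] := good i.
set D := ds i 0 i0 * x0 + ds i 0 i1 * x1 + ds i 0 i2 * x2 in h1 h2.
rewrite (_ : x0 / s * ds i 0 i0 + x1 / s * ds i 0 i1 + x2 / s * ds i 0 i2 = D / s);
  last by rewrite /D; field; lra.
rewrite normrM normfV (gtr0_norm hs).
have hD1 : e * s <= `|D|.
  have h : (e * s)^+2 <= `|D|^+2 by rewrite exprMn hs2 real_normK ?num_real //; lra.
  have := @sq_le_abs R (e * s) `|D| (normr_ge0 D) h. have : 0 <= e * s by apply: mulr_ge0; lra.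
  by move=> h0; rewrite ger0_norm.
have hD2 : `|D| <= (1 - e) * s.
  apply: sq_le_abs; first by apply: mulr_ge0; lra.
  by rewrite exprMn hs2.
apply/andP; split.
  by rewrite ler_pdivlMr.
by rewrite ler_pdivrMr.
Qed.
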